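(* Let $G$ be a finite, connected game board in which every edge is marked with an arrow and there are no sinks and no sources. Then $G$ contains a cycle cell.
   Context: A board is a simple connected planar graph embedded in the plane, together with its bounded cells (bounded faces). An edge marked with an arrow is oriented in one of its two directions. A sink is a vertex all of whose incident edges are marked with arrows pointing toward it; a source is a vertex all of whose incident edges are marked with arrows pointing away from it. A cycle cell is a bounded cell all of whose boundary edges are marked with arrows all cycling in the same direction (all clockwise or all counterclockwise) around that cell. *)

(* Defs.v *)
(* A board (connected simple plane graph) is encoded as a
   combinatorial map (rotation system) of genus 0 with a distinguished outer face. *)
From mathcomp Require Import all_boot.
Set Implicit Arguments. Unset Strict Implicit. Unset Printing Implicit Defensive.

Section Board.
Variables (D : finType) (alpha sigma : D -> D).
(* D : darts (half-edges); alpha : reversal of a dart; sigma : rotation of the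
   darts around their tail vertex (counterclockwise order of the embedding).
   Vertices = sigma-orbits, edges = alpha-orbits, faces = phi-orbits. *)

Definition face_perm (d : D) : D := sigma (alpha d).

Definition map_adj : rel D := fun x y => (y == sigma x) || (y == alpha x).

Definition is_plane_simple_map : Prop :=
  [/\ injective sigma, involutive alpha & (forall d, alpha d != d)] /\
  [/\
      (* no loops: a dart and its reverse start at different vertices *)
      (forall d, ~~ fconnect sigma d (alpha d)),
      (* no multiple edges *)
      (forall d e, fconnect sigma d e -> fconnect sigma (alpha d) (alpha e) -> d = e),
      (forall d e, connect map_adj d e)
    & (* planar: Euler's formula V - E + F = 2 *)
      fcard sigma D + fcard face_perm D = fcard alpha D + 2].

Variable (orient : D -> bool).
(* orient d = true : the arrow on the edge of d points from the tail of d to its head. *)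
Definition is_orientation : Prop := forall d, orient (alpha d) = ~~ orient d.

Definition is_sink (d : D) : bool := [forall e, fconnect sigma d e ==> ~~ orient e].
Definition is_source (d : D) : bool := [forall e, fconnect sigma d e ==> orient e].

(* The face containing d (traversed as the closed boundary walk d, phi d, ...)
   is bounded when it is not the outer face (the face of dart outer). *)
Definition bounded_cell (outer d : D) : bool := ~~ fconnect face_perm outer d.

Definition cycle_cell (outer d : D) : bool :=
  bounded_cell outer d &&
  ([forall e, fconnect face_perm d e ==> orient e] ||
   [forall e, fconnect face_perm d e ==> ~~ orient e]).

End Board.

(* Main.v *)
Require Import Defs.
From mathcomp Require Import all_boot zify.
Set Implicit Arguments. Unset Strict Implicit. Unset Printing Implicit Defensive.

Section Aux.
Variable D : finType.

Lemma switch_exists (p : D -> D) (b : D -> bool) n u :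
  b u != b (iter n p u) ->
  exists z, [/\ fconnect p u z, b z = b u & b (p z) != b u].
Proof.
elim: n u => [|n IH] u; first by rewrite /= eqxx.
rewrite iterSr.
case: (boolP (b (p u) == b u)) => [/eqP Epu|Npu] H.
  have /IH [z [c1 c2 c3]] : b (p u) != b (iter n p (p u)) by rewrite Epu.
  exists z; split; rewrite -?Epu //.
  exact: connect_trans (fconnect1 p u) c1.
by exists u; split => //; exact: connect0.
Qed.

Lemma switch_two (p : D -> D) (b : D -> bool) (injp : injective p) e1 e2 :
  fconnect p e1 e2 -> b e1 != b e2 ->
  2 <= #|[pred z | fconnect p e1 z && (b z != b (p z))]|.
Proof.
move=> c12 ne.
have /switch_exists [z1 [c1 b1 s1]] : b e1 != b (iter (findex p e1 e2) p e1)
   by rewrite iter_findex.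
have c21 : fconnect p e2 e1 by rewrite fconnect_sym.
have /switch_exists [z2 [c2 b2 s2]] : b e2 != b (iter (findex p e2 e1) p e2)
   by rewrite iter_findex // eq_sym.
have nz : z1 != z2 by apply: contraNneq ne => E; rewrite -b1 -b2 E.
have -> : 2 = #|[set z1; z2]| by rewrite cards2 nz.
apply: subset_leq_card; apply/subsetP => z; rewrite !inE => /orP[]/eqP->.
  by rewrite c1 b1 eq_sym s1.
by rewrite (connect_trans c12 c2) b2 eq_sym s2.
Qed.

Lemma switch_bound (p : D -> D) (b : D -> bool) (injp : injective p) (P : pred D) :
  (forall r, froot p r == r -> P r -> exists e1 e2,
      [/\ fconnect p r e1, fconnect p r e2 & b e1 != b e2]) ->
  2 * #|[pred r | (froot p r == r) && P r]| <= \sum_(x : D) (b x != b (p x)).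
Proof.
move=> H.
rewrite (partition_big (froot p) (fun r => froot p r == r)) /=; last first.
  by move=> i _; apply: (roots_root (fconnect_sym injp)).
rewrite mulnC -sum_nat_const.
rewrite [X in _ <= X](bigID P) /= -[X in X <= _]addn0 leq_add //.
apply: leq_sum => r /andP[rr Pr].
have [e1 [e2 [c1 c2 ne]]] := H r rr Pr.
have c12 : fconnect p e1 e2 by rewrite (connect_trans _ c2) // fconnect_sym.
have := switch_two (b:=b) injp c12 ne.
move/leq_trans; apply.
rewrite [X in _ <= X](_ : _ = \sum_(i | (froot p i == r) && (b i != b (p i))) 1);
  last by rewrite big_mkcondr; apply: eq_bigr => i _; case: (b i != b (p i)).
rewrite sum1_card.
apply: subset_leq_card; apply/subsetP => z; rewrite !inE => /andP[cz sz].

have crz : fconnect p r z := connect_trans c1 cz.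
by rewrite unfold_in sz andbT -{1}(eqP rr) (root_connect (fconnect_sym injp)) fconnect_sym.
Qed.
End Aux.

Lemma edges_count (D : finType) (alpha : D -> D) :
  involutive alpha -> (forall d, alpha d != d) -> fcard alpha D * 2 = #|D|.
Proof.
move=> invA nf.
have injA : injective alpha := inv_inj invA.
have ord2 : forall x, order alpha x = 2.
  move=> x; have := card2 x (alpha x); rewrite eq_sym nf => <-; rewrite /order.
  apply: eq_card => y; rewrite !inE.
  apply/idP/idP.
    move=> /iter_findex <-; elim: (findex _ _ _) => [|n IH] /=; first by rewrite eqxx.
    by case/orP: IH => /eqP->; rewrite ?invA eqxx ?orbT.
  by case/orP => /eqP->; [apply: connect0 | apply: fconnect1].
rewrite -(@fcard_order_set _ _ injA 2 D).
- by [].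
- by apply/subsetP => x _; rewrite inE ord2.
- by move=> x y _.
Qed.

Theorem theorem6p1 (D : finType) (alpha sigma : D -> D) (outer : D)
    (orient : D -> bool) :
  is_plane_simple_map alpha sigma ->
  is_orientation alpha orient ->
  (forall d, ~~ is_sink sigma orient d) ->
  (forall d, ~~ is_source sigma orient d) ->
  exists d, cycle_cell alpha sigma orient outer d.
Proof.
move=> [[injs invA nf] [_ _ _ euler]] Hor nsink nsrc.
case: (pickP (cycle_cell alpha sigma orient outer)) => [d Hd | none]; first by exists d.
exfalso.
set phi := face_perm alpha sigma.
have injA : injective alpha := inv_inj invA.
have injp : injective phi := inj_comp injs injA.
have E2 := edges_count invA nf.
set Ss := \sum_(x : D) (orient x != orient (sigma x)).
set Sf := \sum_(x : D) (orient x != orient (phi x)).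
have SsSf : Ss + Sf = #|D|.
  rewrite /Sf (reindex_inj injA) /= -big_split /= -sum1_card.
  apply: eq_bigr => x _; rewrite /phi /face_perm invA Hor.
  by case: (orient x); case: (orient (sigma x)).
have Bs : 2 * fcard sigma D <= Ss.
  have := switch_bound (b := orient) injs (P := predT).
  rewrite /n_comp_mem.
  have -> : #|[pred r | (froot sigma r == r) && predT r]| = #|predI (froots sigma) (mem D)|.
    by apply: eq_card => x; rewrite !inE andbT.
  apply => r _ _.
  have := nsink r; rewrite /is_sink negb_forall => /existsP [e1].
  rewrite negb_imply negbK => /andP [c1 o1].
  have := nsrc r; rewrite /is_source negb_forall => /existsP [e2].
  rewrite negb_imply => /andP [c2 o2].
  by exists e1, e2; rewrite c1 c2 o1 (negbTE o2).
have Bf : 2 * #|[pred r | (froot phi r == r) && ~~ fconnect phi outer r]| <= Sf.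
  apply: switch_bound => // r _ Pr.
  have := none r; rewrite /cycle_cell /bounded_cell -/phi Pr /= => /norP [h1 h2].
  move: h1; rewrite negb_forall => /existsP [e1].
  rewrite negb_imply => /andP [c1 o1].
  move: h2; rewrite negb_forall => /existsP [e2].
  rewrite negb_imply negbK => /andP [c2 o2].
  by exists e1, e2; rewrite c1 c2 (negbTE o1) o2.
have Fb : fcard phi D <= #|[pred r | (froot phi r == r) && ~~ fconnect phi outer r]| + 1.
  rewrite /n_comp_mem -(cardID (fconnect phi outer)) addnC leq_add //.
    apply: subset_leq_card; apply/subsetP => x; rewrite !inE => /and3P[h r _]; rewrite h andbT; exact: r.
  apply: (@leq_trans #|pred1 (froot phi outer)|); last by rewrite card1.
  apply: subset_leq_card; apply/subsetP => x.
  rewrite !inE andbT => /andP [/eqP rx cx].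
  by rewrite -rx; apply/eqP/rootP => //; [exact: fconnect_sym | rewrite fconnect_sym].
rewrite -/phi in euler.
lia.
Qed.
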